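(* Let $\ell^{\infty}$ be the space of bounded real sequences $x=(x_i)_{i\in\mathbb{N}}$, and for $p\in(0,\infty)$, $n\in\mathbb{N}$ let $$\|x\|_{\infty,p,n}:=\sup_{j\in\mathbb{N}}\Big(\frac{1}{n}\sum_{i=j}^{j+(n-1)}|x_i|^{p}\Big)^{1/p}.$$ Let $p\in[1,\infty)$ and $n,m\in\mathbb{N}$ with $n<m$. Then for all $x\in\ell^{\infty}$, $$\|x\|_{\infty,p,m}^{p}\leq \frac{(\lfloor m/n\rfloor+1)\,n}{m}\,\|x\|_{\infty,p,n}^{p}\leq 2\,\|x\|_{\infty,p,n}^{p}.$$
   Context: $\mathbb{N}=\{1,2,3,\dots\}$; $\lfloor\cdot\rfloor$ denotes the floor function. *)

(* Defs.v *)
From mathcomp Require Import all_boot all_order all_algebra.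
From mathcomp Require Import all_classical all_reals all_analysis.
Set Implicit Arguments. Unset Strict Implicit. Unset Printing Implicit Defensive.
Import Order.TTheory GRing.Theory Num.Theory.
Local Open Scope classical_set_scope.
Local Open Scope ring_scope.

(* A real sequence (x_i)_{i in N}, N = {1,2,...}, is represented by
   x : nat -> R with x k standing for x_{k+1}. *)
Definition bounded_seq (R : realType) (x : nat -> R) : Prop :=
  exists M : R, forall i : nat, `|x i| <= M.

Definition norm_inf_p_n (R : realType) (p : R) (n : nat) (x : nat -> R) : R :=
  sup [set ((n%:R)^-1 * \sum_(j <= i < j + n) (`|x i| `^ p)) `^ (p^-1)
      | j in [set: nat]].

(* Main.v *)
Require Import Defs.
From mathcomp Require Import all_boot all_order all_algebra.
From mathcomp Require Import all_classical all_reals all_analysis.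
Import Order.TTheory GRing.Theory Num.Theory.
Local Open Scope ring_scope.

Lemma powRK_aux {R : realType} (a p : R) : 0 < p -> 0 <= a ->
  (a `^ p^-1) `^ p = a.
Proof.
move=> p0 a0; rewrite -powRrM mulVf ?gt_eqF // powRr1 //.
Qed.

Lemma powRK_aux2 {R : realType} (a p : R) : 0 < p -> 0 <= a ->
  (a `^ p) `^ p^-1 = a.
Proof.
move=> p0 a0; rewrite -powRrM mulfV ?gt_eqF // powRr1 //.
Qed.

Lemma split_sum {R : realType} (f : nat -> R) (a b c : nat) : (a <= b <= c)%N ->
  \sum_(a <= i < c) f i = \sum_(a <= i < b) f i + \sum_(b <= i < c) f i.
Proof. by move=> /andP[h1 h2]; rewrite (big_cat_nat h1 h2). Qed.

Theorem lemma1p4 (R : realType) (p : R) (n m : nat) (x : nat -> R) :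
  1 <= p -> (0 < n)%N -> (n < m)%N -> bounded_seq x ->
  norm_inf_p_n p m x `^ p
    <= (((m %/ n).+1 * n)%:R / m%:R) * norm_inf_p_n p n x `^ p
  /\ (((m %/ n).+1 * n)%:R / m%:R) * norm_inf_p_n p n x `^ p
    <= 2 * norm_inf_p_n p n x `^ p.
Proof.
move=> p1 n0 nm [M hM].
have p0 : 0 < p by apply: lt_le_trans p1.
have m0 : (0 < m)%N by apply: leq_trans nm.
have M0 : 0 <= M by apply: le_trans (hM 0%N).
set f := fun i => `|x i| `^ p.
have f0 : forall i, 0 <= f i by move=> i; exact: powR_ge0.
have fM : forall i, f i <= M `^ p.
  move=> i; rewrite /f; apply: ge0_ler_powR; rewrite ?nnegrE //; exact: ltW.
set A := fun (k j : nat) => (k%:R)^-1 * \sum_(j <= i < j + k) f i.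
have A0 : forall k j, 0 <= A k j.
  by move=> k j; rewrite /A mulr_ge0 // ?invr_ge0 // sumr_ge0.
have sumM : forall k j, \sum_(j <= i < j + k) f i <= k%:R * M `^ p.
  move=> k j; elim: k => [|k IH]; first by rewrite addn0 big_geq // mul0r.
  rewrite addnS big_nat_recr /=; last by rewrite leq_addr.
  by rewrite -natr1 mulrDl mul1r; apply: lerD.
have hubA : forall k, (0 < k)%N -> forall j, A k j `^ p^-1 <= M.
  move=> k k0 j; rewrite -(powRK_aux2 _ _ p0 M0) //.
  apply: ge0_ler_powR; [by rewrite invr_ge0 ltW | rewrite nnegrE; exact: A0 |
    by rewrite nnegrE powR_ge0 | ].
  rewrite /A ler_pdivrMl ?ltr0n //; try exact: sumM.
set s := norm_inf_p_n p n x.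
have hasub : forall k, (0 < k)%N -> has_ubound
   [set ((k%:R)^-1 * \sum_(j <= i < j + k) (`|x i| `^ p)) `^ (p^-1)
      | j in [set: nat]].
  move=> k k0; exists M => y [j _ <-]; exact: hubA.
have key1 : forall j, A n j <= s `^ p.
  move=> j; have h : A n j `^ p^-1 <= s.
    by apply: (ub_le_sup (hasub n n0)); exists j.
  rewrite -(powRK_aux _ _ p0 (A0 n j)).
  apply: ge0_ler_powR; [exact: ltW | by rewrite nnegrE powR_ge0 |
    rewrite nnegrE; apply: le_trans h; exact: powR_ge0 | exact: h].
have blocks : forall k j, \sum_(j <= i < j + k * n) f i <= (k * n)%:R * s `^ p.
  move=> k j; elim: k => [|k IH]; first by rewrite mul0n addn0 big_geq // mul0r.
  rewrite mulSnr addnA (@split_sum _ _ _ (j + k * n)%N); last first.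
    by rewrite leq_addr leq_addr.
  rewrite natrD mulrDl lerD //.
  have e : \sum_(j + k * n <= i < j + k * n + n) f i = n%:R * A n (j + k * n)%N.
    by rewrite /A /= mulrA divff ?mul1r // pnatr_eq0 -lt0n.
  by rewrite e ler_wpM2l.
set C := ((m %/ n).+1 * n)%:R / m%:R.
have sp0 : 0 <= s `^ p by exact: powR_ge0.
have key2 : forall j, A m j <= C * s `^ p.
  move=> j; rewrite /A /C /= -mulrA mulrCA; apply: ler_wpM2l; first by rewrite invr_ge0.
  apply: le_trans; last exact: (blocks ((m %/ n).+1) j).
  rewrite (@split_sum _ _ _ (j + m)%N (j + (m %/ n).+1 * n)%N).
    by rewrite lerDl sumr_ge0.
  by rewrite leq_addr leq_add2l ltnW // ltn_ceil.
have Cs0 : 0 <= C * s `^ p by rewrite mulr_ge0 // divr_ge0.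
have supm : norm_inf_p_n p m x <= (C * s `^ p) `^ p^-1.
  apply: ge_sup; first by exists (A m 0%N `^ p^-1); exists 0%N.
  move=> y [j _ <-].
  apply: ge0_ler_powR; [by rewrite invr_ge0 ltW | rewrite nnegrE; exact: A0 |
    by rewrite nnegrE | exact: key2].
have supm0 : 0 <= norm_inf_p_n p m x.
  have h0 : A m 0%N `^ p^-1 <= norm_inf_p_n p m x.
    by apply: (ub_le_sup (hasub m m0)); exists 0%N.
  exact: le_trans (powR_ge0 _ _) h0.
split.
  rewrite -(powRK_aux _ _ p0 Cs0).
  apply: ge0_ler_powR; [exact: ltW | by rewrite nnegrE | by rewrite nnegrE powR_ge0 | exact: supm].
rewrite ler_wpM2r // /C ler_pdivrMr ?ltr0n // -natrM ler_nat mulSn addnC mul2n -addnn.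
by rewrite leq_add // ?leq_trunc_div // ltnW.
Qed.
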